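(* Let $n\ge3$ and $s\ge1$ be integers. Then $p_{2s}(n,2sd)\to\infty$ as $d\to\infty$.
   Context: $\mathbb{R}[x_1,\dots,x_n]_e$ denotes the real vector space of homogeneous polynomials (forms) of degree $e$ in $n$ variables. For integers $n,m,d\ge1$, let $\Sigma^m_{n,md}\subset\mathbb{R}[x_1,\dots,x_n]_{md}$ be the set of forms $f=\sum_{i=1}^r f_i^m$ with $r\in\mathbb{N}$ and $f_i\in\mathbb{R}[x_1,\dots,x_n]_d$. The homogeneous Pythagoras number $p_m(n,md)$ is the minimal $\ell$ such that every $f\in\Sigma^m_{n,md}$ admits such a representation with $r\le\ell$. *)

(* Defs.v *)
From mathcomp Require Import all_boot all_algebra.
From mathcomp Require Import reals.
From mathcomp Require Import mpoly.
Set Implicit Arguments. Unset Strict Implicit. Unset Printing Implicit Defensive.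
Import GRing.Theory.
Local Open Scope ring_scope.

Definition sum_pow_rep (R : realType) (n m d r : nat) (f : {mpoly R[n]}) : Prop :=
  exists F : 'I_r -> {mpoly R[n]},
    (forall i, F i \is d.-homog) /\ f = \sum_(i < r) (F i) ^+ m.

Definition in_Sigma (R : realType) (n m d : nat) (f : {mpoly R[n]}) : Prop :=
  exists r, sum_pow_rep m d r f.

(* "p_m(n, m d) <= l": every f in Sigma^m_{n,md} is a sum of at most l
   m-th powers of degree-d forms.  The homogeneous Pythagoras number
   p_m(n,md) is the least l with this property (monotone in l), so
   p_m(n,md) > B  <->  ~ pyth_le R n m d B. *)
Definition pyth_le (R : realType) (n m d l : nat) : Prop :=
  forall f : {mpoly R[n]}, in_Sigma m d f ->
    exists r, (r <= l)%N /\ sum_pow_rep m d r f.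

(* Main.v *)
Require Import Defs.
From mathcomp Require Import all_boot all_algebra.
From mathcomp Require Import reals.
From mathcomp Require Import mpoly.
From mathcomp Require Import zify ring lra.
Set Implicit Arguments. Unset Strict Implicit. Unset Printing Implicit Defensive.
Import GRing.Theory Num.Theory.
Local Open Scope ring_scope.

Definition PFd (R : realType) (N : nat) (phi : R -> R) :=
  exists q : {poly R}, (size q <= N.+1)%N /\ forall t, q.[t] = phi t.

Lemma PFd_le (R : realType) N M (phi : R -> R) : (N <= M)%N -> PFd N phi -> PFd M phi.
Proof. move=> le [q [sq hq]]; exists q; split=> //; exact: leq_trans sq _. Qed.

Lemma PFd_ext (R : realType) N (phi psi : R -> R) : phi =1 psi -> PFd N phi -> PFd N psi.
Proof. by move=> e [q [sq hq]]; exists q; split=> // t; rewrite hq e. Qed.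

Lemma PFd_const (R : realType) (c : R) : PFd 0 (fun _ => c).
Proof. by exists c%:P; rewrite size_polyC leq_b1; split=> // t; rewrite hornerC. Qed.

Lemma PFd_id (R : realType) : PFd 1 (fun t : R => t).
Proof. by exists 'X; rewrite size_polyX; split=> // t; rewrite hornerX. Qed.

Lemma PFd_add (R : realType) N (phi psi : R -> R) :
  PFd N phi -> PFd N psi -> PFd N (fun t => phi t + psi t).
Proof.
move=> [p [sp hp]] [q [sq hq]]; exists (p + q); split.
  by apply: leq_trans (size_polyD _ _) _; rewrite geq_max sp sq.
by move=> t; rewrite hornerD hp hq.
Qed.

Lemma PFd_opp (R : realType) N (phi : R -> R) :
  PFd N phi -> PFd N (fun t => - phi t).
Proof.
move=> [p [sp hp]]; exists (- p); split; first by rewrite size_polyN.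
by move=> t; rewrite hornerN hp.
Qed.

Lemma PFd_mul (R : realType) N M (phi psi : R -> R) :
  PFd N phi -> PFd M psi -> PFd (N + M) (fun t => phi t * psi t).
Proof.
move=> [p [sp hp]] [q [sq hq]]; exists (p * q); split.
  apply: leq_trans (size_polyMleq _ _) _.
  move: sp sq; case: (size p) => [|a]; case: (size q) => [|b] /=; lia.
by move=> t; rewrite hornerM hp hq.
Qed.

Lemma PFd_exp (R : realType) N (phi : R -> R) k :
  PFd N phi -> PFd (N * k) (fun t => phi t ^+ k).
Proof.
move=> h; elim: k => [|k ih].
  by rewrite muln0; apply: PFd_ext (PFd_const 1) => t; rewrite expr0.
by rewrite mulnS; apply: PFd_ext (PFd_mul h ih) => t; rewrite exprS.
Qed.

Lemma PFd_sum (R : realType) (I : Type) (r : seq I) (P : pred I) N (F : I -> R -> R) :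
  (forall i, P i -> PFd N (F i)) -> PFd N (fun t => \sum_(i <- r | P i) F i t).
Proof.
move=> h; elim: r => [|x r ih].
  by apply: PFd_ext (PFd_le (leq0n N) (PFd_const 0)) => t; rewrite big_nil.
case Px: (P x).
  by apply: PFd_ext (PFd_add (h x Px) ih) => t; rewrite big_cons Px.
by apply: PFd_ext ih => t; rewrite big_cons Px.
Qed.

Lemma PFd_prod (R : realType) (I : Type) (r : seq I) (Nf : I -> nat) (F : I -> R -> R) :
  (forall i, PFd (Nf i) (F i)) -> PFd (\sum_(i <- r) Nf i) (fun t => \prod_(i <- r) F i t).
Proof.
move=> h; elim: r => [|x r ih].
  by rewrite big_nil; apply: PFd_ext (PFd_const 1) => t; rewrite big_nil.
by rewrite big_cons; apply: PFd_ext (PFd_mul (h x) ih) => t; rewrite big_cons.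
Qed.

Lemma PFd_roots (R : realType) N (phi : R -> R) (rs : seq R) :
  PFd N phi -> uniq rs -> (N < size rs)%N -> (forall x, x \in rs -> phi x = 0) ->
  forall t, phi t = 0.
Proof.
move=> [q [sq hq]] urs lrs hz t; rewrite -hq.
have -> : q = 0; last by rewrite horner0.
apply/eqP; apply: contraTT lrs => q0; rewrite -leqNgt.
have := max_poly_roots q0 _ urs.
have -> : all (root q) rs by apply/allP => x xr; rewrite /root hq hz.
by move=> /(_ isT) h; rewrite -ltnS (leq_trans h).
Qed.

Lemma natr_uniq (R : realType) (s : seq nat) : uniq s -> uniq [seq (i%:R : R) | i <- s].
Proof. by move=> us; rewrite map_inj_uniq // => a b /eqP; rewrite eqr_nat => /eqP. Qed.

Lemma PFd_cont0 (R : realType) N (phi : R -> R) :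
  PFd N phi -> (forall t, t != 0 -> phi t = 0) -> phi 0 = 0.
Proof.
move=> h hz; apply: (PFd_roots h (rs := [seq (i%:R : R) | i <- iota 1 N.+1])).
- by apply: natr_uniq; apply: iota_uniq.
- by rewrite size_map size_iota.
move=> x /mapP [i]; rewrite mem_iota => /andP [i1 _] ->; apply: hz.
by rewrite pnatr_eq0 -lt0n.
Qed.

Lemma poly_eq0_horner (R : realType) (p : {poly R}) : (forall x, p.[x] = 0) -> p = 0.
Proof.
move=> h; apply/eqP; apply: contraT => p0.
have := max_poly_roots p0 (rs := [seq (i%:R : R) | i <- iota 0 (size p)]).
rewrite size_map size_iota ltnn; apply.
  by apply/allP => x _; rewrite /root h.
by apply: natr_uniq; apply: iota_uniq.
Qed.


Lemma PFd_affine (R : realType) (a b : R) : PFd 1 (fun t => a + t * b).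
Proof.
apply: PFd_add; first exact: PFd_le (PFd_const a).
by have := PFd_mul (PFd_id R) (PFd_const b); rewrite addn0; apply: PFd_ext.
Qed.

Lemma PFd_meval (R : realType) n d (g : {mpoly R[n]}) (P W : 'I_n -> R) :
  g \is d.-homog -> PFd d (fun t => g.@[fun i => P i + t * W i]).
Proof.
move=> /dhomogP hg.
apply: (@PFd_ext _ _ (fun t => \sum_(m <- msupp g | m \in msupp g)
    g@_m * \prod_i (P i + t * W i) ^+ m i)).
  by move=> t; rewrite mevalE big_seq.
apply: PFd_sum => m /hg md.
have -> : d = (0 + \sum_(i <- index_enum 'I_n) m i)%N.
  by rewrite add0n -md; exact: mdegE.
apply: PFd_mul; first exact: PFd_const.
apply: PFd_prod => i.
by have := PFd_exp (m i) (PFd_affine (P i) (W i)); rewrite mul1n.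
Qed.


Lemma prod_extract (R : realType) (I : eqType) (r : seq I) (P : pred I) (F : I -> R) j :
  j \in r -> uniq r -> P j ->
  \prod_(i <- r | P i) F i = F j * \prod_(i <- r | P i && (i != j)) F i.
Proof.
move=> jr ur Pj; rewrite -big_filter (bigD1_seq j) ?mem_filter ?Pj ?filter_uniq //.
by rewrite big_filter_cond.
Qed.

Definition ell (R : realType) (m : nat) (a b : R) : R := a + m%:R * b + m%:R ^+ 2.
Definition hv (R : realType) (L m : nat) (a b : R) : R :=
  \prod_(j <- iota 0 L | j != m) ell j a b.

Lemma count_neq L m : (m < L)%N -> count (fun j => j != m) (iota 0 L) = L.-1.
Proof.
move=> mL; have := count_predC (pred1 m) (iota 0 L).
rewrite size_iota.
have -> : count (pred1 m) (iota 0 L) = 1%N.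
  by rewrite (count_uniq_mem _ (iota_uniq 0 L)) mem_iota leq0n add0n mL.
have -> : count (predC (pred1 m)) (iota 0 L) = count (fun j => j != m) (iota 0 L) by [].
by case: L mL => // L _; rewrite add1n => -[].
Qed.

Lemma hv_PF (R : realType) L m (a0 a1 b0 b1 : R) : (m < L)%N ->
  PFd L.-1 (fun t => hv L m (a0 + t * a1) (b0 + t * b1)).
Proof.
move=> mL; rewrite -(count_neq mL) -size_filter.
apply: (@PFd_ext _ _ (fun t => \prod_(j <- [seq j <- iota 0 L | j != m]) ell j (a0 + t * a1) (b0 + t * b1))).
  by move=> t; rewrite /hv big_filter.
have -> : size [seq j <- iota 0 L | j != m] = (\sum_(j <- [seq j <- iota 0 L | j != m]) 1)%N.
  by rewrite sum1_size.
apply: PFd_prod => j.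
apply: (@PFd_ext _ _ (fun t => (a0 + j%:R * b0 + j%:R ^+ 2) + t * (a1 + j%:R * b1))).
  by move=> t; rewrite /ell; ring.
exact: PFd_affine.
Qed.

Lemma hv_zero (R : realType) L m j (a b : R) :
  (j < L)%N -> j != m -> ell j a b = 0 -> hv L m a b = 0.
Proof.
move=> jL jm e; apply/eqP; rewrite prodf_seq_eq0; apply/hasP; exists j.
  by rewrite mem_iota leq0n add0n.
by rewrite jm e eqxx.
Qed.

Definition qa (R : realType) (j : nat) (u : R) : R := u * j%:R.
Definition qb (R : realType) (j : nat) (u : R) : R := - j%:R - u.

Lemma ell_q (R : realType) m j (u : R) : ell m (qa j u) (qb j u) = (m%:R - j%:R) * (m%:R - u).
Proof. by rewrite /ell /qa /qb; ring. Qed.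

Lemma prod_affine_PF (R : realType) (r : seq nat) (P : pred nat) (al be : nat -> R) :
  PFd (size r) (fun t => \prod_(m <- r | P m) (al m + t * be m)).
Proof.
elim: r => [|x r ih].
  by apply: PFd_ext (PFd_const 1) => t; rewrite big_nil.
case Px: (P x).
  have := PFd_mul (PFd_affine (al x) (be x)) ih; rewrite add1n.
  by apply: PFd_ext => t; rewrite big_cons Px.
by apply: PFd_le (leqnSn _) _; apply: PFd_ext ih => t; rewrite big_cons Px.
Qed.

Lemma sum2 (R : realType) L (F : 'I_L -> R) (j k : 'I_L) : j != k ->
  (forall m, m != j -> m != k -> F m = 0) -> \sum_(m < L) F m = F j + F k.
Proof.
move=> jk h; rewrite (bigD1 j) //= (bigD1 k) 1?eq_sym //= big1 ?addr0 //.
by move=> m /andP [mj mk]; apply: h.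
Qed.


Lemma pow2s_ge0 (R : realType) s (x : R) : 0 <= x ^+ (2 * s).
Proof. by rewrite exprM exprn_ge0 // sqr_ge0. Qed.

Lemma sum_pow_eq0 (R : realType) r s (F : 'I_r -> R) : (0 < s)%N ->
  \sum_(i < r) F i ^+ (2 * s) = 0 -> forall i, F i = 0.
Proof.
move=> s0 h i; have := psumr_eq0P (P := predT) (F := fun i => F i ^+ (2 * s)) _ h.
move=> /(_ (fun i _ => pow2s_ge0 s (F i)) i isT) /eqP.
by rewrite expf_eq0 muln_gt0 s0 /= => /eqP.
Qed.

Section Main.
Variables (R : realType) (d s r : nat).
Hypothesis (hs : (0 < s)%N) (hd : (0 < d)%N).
Variable g : 'I_r -> R -> R -> R.
Hypothesis gPF : forall i (a0 a1 b0 b1 : R), PFd d (fun t => g i (a0 + t * a1) (b0 + t * b1)).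
Local Notation L := d.+1.
Hypothesis hid : forall a b : R,
  \sum_(m < L) hv L m a b ^+ (2 * s) = \sum_(i < r) g i a b ^+ (2 * s).

Lemma natrI' (a b : nat) : (a%:R == b%:R :> R) = (a == b).
Proof. exact: eqr_nat. Qed.

Lemma stepA (j k : nat) : (j < L)%N -> (k < L)%N -> j != k ->
  forall i, g i (qa j k%:R) (qb j k%:R) = 0.
Proof.
move=> jL kL jk.
have h0 : forall m : 'I_L, hv L m (qa j (k%:R : R)) (qb j (k%:R : R)) = 0.
  move=> m; case: (eqVneq (m : nat) j) => [mj | mj].
    apply: (@hv_zero _ _ _ k) => //; first by rewrite mj eq_sym.
    by rewrite ell_q subrr mulr0.
  by apply: (@hv_zero _ _ _ j) => //; [rewrite eq_sym | rewrite ell_q subrr mul0r].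
apply: sum_pow_eq0 hs _; rewrite -hid; apply: big1 => m _.
by rewrite h0 expr0n (_ : (2 * s == 0)%N = false) //; lia.
Qed.

Definition lam (i : 'I_r) (j : 'I_L) : R :=
  g i (qa j (j : nat)%:R) (qb j (j : nat)%:R) / hv L j (qa j (j : nat)%:R) (qb j (j : nat)%:R).

Lemma hv_jj_neq0 (j : nat) : hv L j (qa j (j%:R : R)) (qb j (j%:R : R)) != 0.
Proof.
rewrite prodf_seq_neq0; apply/allP => m _; apply/implyP => mj.
by rewrite ell_q mulf_neq0 // subr_eq0 natrI'.
Qed.

Lemma gPF_line i (j : nat) : PFd d (fun u => g i (qa j u) (qb j u)).
Proof.
apply: PFd_ext (gPF i 0 j%:R (- j%:R) (-1)) => u.
by congr (g i); rewrite /qa /qb; ring.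
Qed.

Lemma hvPF_line (m j : nat) : (m < L)%N -> PFd d (fun u : R => hv L m (qa j u) (qb j u)).
Proof.
move=> mL; apply: PFd_ext (hv_PF 0 j%:R (- j%:R) (-1) mL) => u.
by congr (hv L m); rewrite /qa /qb; ring.
Qed.

Lemma stepB i (j : 'I_L) u : g i (qa j u) (qb j u) = lam i j * hv L j (qa j u) (qb j u).
Proof.
apply/eqP; rewrite -subr_eq0; apply/eqP; move: u.
apply: (@PFd_roots _ d _ [seq (k%:R : R) | k <- iota 0 L]).
- apply: PFd_add; first exact: gPF_line.
  apply: PFd_opp; have := PFd_mul (PFd_const (lam i j)) (hvPF_line j (ltn_ord j)).
  by rewrite add0n.
- by apply: natr_uniq; apply: iota_uniq.
- by rewrite size_map size_iota.
move=> x /mapP [k]; rewrite mem_iota add0n => /andP [_ kL] ->.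
case: (eqVneq k j) => [-> | kj].
  by rewrite /lam divfK ?subrr // hv_jj_neq0.
rewrite stepA // ?(@hv_zero _ _ _ k) ?mulr0 ?subrr //.
  by rewrite ell_q subrr mulr0.
by rewrite eq_sym.
Qed.

Definition Dv i (a b : R) := g i a b - \sum_(m < L) lam i m * hv L m a b.

Lemma DPF i (a0 a1 b0 b1 : R) : PFd d (fun t => Dv i (a0 + t * a1) (b0 + t * b1)).
Proof.
apply: PFd_add; first exact: gPF.
apply: PFd_opp.
apply: (@PFd_ext _ _ (fun t => \sum_(m <- index_enum 'I_L | true)
   (fun m t => lam i m * hv L m (a0 + t * a1) (b0 + t * b1)) m t)) => //.
apply: PFd_sum => m _.
by have := PFd_mul (PFd_const (lam i m)) (hv_PF a0 a1 b0 b1 (ltn_ord m)); rewrite add0n.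
Qed.

Lemma D_line i (j : 'I_L) u : Dv i (qa j u) (qb j u) = 0.
Proof.
rewrite /Dv stepB (bigD1 j) //= big1 ?addr0 ?subrr // => m mj.
rewrite (@hv_zero _ _ _ j) ?mulr0 //; first by rewrite eq_sym.
by rewrite ell_q subrr mul0r.
Qed.

Lemma D_horiz i (c : nat) : (0 < c)%N -> forall u, Dv i u c%:R = 0.
Proof.
move=> c0 u.
have P1 : PFd d (fun t => Dv i t c%:R).
  by apply: PFd_ext (DPF i 0 1 c%:R 0) => t; rewrite add0r mulr1 mulr0 addr0.
apply: (@PFd_roots _ d _ [seq - ((j * (j + c))%:R : R) | j <- iota 0 L] P1).
- rewrite map_inj_uniq ?iota_uniq // => x y /eqP; rewrite eqr_opp eqr_nat => /eqP h.
  case: (ltngtP x y) => // xy; exfalso; move: h; nia.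
- by rewrite size_map size_iota.
move=> x /mapP [j]; rewrite mem_iota add0n => /andP [_ jL] ->.
have jL' : (j < L)%N by [].
have := D_line i (Ordinal jL') (- (j + c)%:R) => /=.
rewrite /qa /qb !natrD !natrM => h; rewrite -h; congr Dv; ring.
Qed.

Lemma stepC i (a b : R) : g i a b = \sum_(m < L) lam i m * hv L m a b.
Proof.
apply/eqP; rewrite -subr_eq0; apply/eqP; rewrite -/(Dv i a b).
have P1 : PFd d (fun t => Dv i a t).
  by apply: PFd_ext (DPF i a 0 0 1) => t; rewrite mulr0 addr0 add0r mulr1.
apply: (@PFd_roots _ d _ [seq (k%:R : R) | k <- iota 1 L] P1).
- by apply: natr_uniq; apply: iota_uniq.
- by rewrite size_map size_iota.
move=> x /mapP [k]; rewrite mem_iota => /andP [k1 _] ->.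
by rewrite D_horiz.
Qed.

Lemma stepD (j k : 'I_L) : j != k -> forall y : R,
  1 + y ^+ (2 * s) = \sum_(i < r) (lam i j + lam i k * y) ^+ (2 * s).
Proof.
move=> jk y.
set jn := (j : nat); set kn := (k : nat).
have jkn : jn != kn by [].
pose jr : R := jn%:R; pose kr : R := kn%:R.
have kj0 : kr - jr != 0 by rewrite subr_eq0 eqr_nat eq_sym.
pose wb := (1 - y) / (kr - jr); pose wa := 1 - kr * wb.
pose pa := qa jn kr; pose pb := qb jn kr.
pose mu (m : nat) := wa + m%:R * wb.
pose c (m : nat) := (m%:R - jr) * (m%:R - kr).
have ell_line : forall m t, ell m (pa + t * wa) (pb + t * wb) = c m + t * mu m.
  by move=> m t; rewrite /ell /pa /pb /qa /qb /c /mu; ring.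
have muk : mu kn = 1 by rewrite /mu /wa; ring.
have muj : mu jn = y by rewrite /mu /wa /wb -/jr; field.
have ck : c kn = 0 by rewrite /c subrr mulr0.
have cj : c jn = 0 by rewrite /c subrr mul0r.
pose V (m : nat) t := if m == jn then
    \prod_(m' <- iota 0 L | (m' != jn) && (m' != kn)) (c m' + t * mu m')
  else y * \prod_(m' <- iota 0 L | (m' != m) && (m' != jn)) (c m' + t * mu m').
have memL : forall m : 'I_L, (m : nat) \in iota 0 L.
  by move=> m; rewrite mem_iota leq0n add0n ltn_ord.
have hvV : forall (m : nat) t, hv L m (pa + t * wa) (pb + t * wb) = t * V m t.
  move=> m t; rewrite /hv (eq_bigr (fun m' => c m' + t * mu m')); last first.
    by move=> m' _; rewrite ell_line.
  rewrite /V; case: eqP => [-> | /eqP mj].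
    rewrite (prod_extract _ (j := kn)) ?iota_uniq ?memL // 1?eq_sym //.
    by rewrite ck muk add0r mulr1.
  rewrite (prod_extract _ (j := jn)) ?iota_uniq ?memL // 1?eq_sym //.
  by rewrite cj muj add0r mulrA.
have VPF : forall m, PFd L (V m).
  move=> m; rewrite /V; case: (m == jn).
    by have := prod_affine_PF (iota 0 L) [pred m' | (m' != jn) && (m' != kn)] c mu;
      rewrite size_iota.
  have := PFd_mul (PFd_const y) (prod_affine_PF (iota 0 L) [pred m' | (m' != m) && (m' != jn)] c mu).
  by rewrite size_iota add0n.
pose e t := \sum_(m < L) V m t ^+ (2 * s) - \sum_(i < r) (\sum_(m < L) lam i m * V m t) ^+ (2 * s).
have ePF : PFd (L * (2 * s)) e.
  apply: PFd_add.
    by apply: (@PFd_sum _ _ _ _ _ (fun (m : 'I_L) t => V m t ^+ (2 * s))) => m _; apply: PFd_exp.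
  apply: PFd_opp.
  apply: (@PFd_sum _ _ _ _ _ (fun (i : 'I_r) t => (\sum_(m < L) lam i m * V m t) ^+ (2 * s))) => i _.
  apply: PFd_exp.
  apply: (@PFd_sum _ _ _ _ _ (fun (m : 'I_L) t => lam i m * V m t)) => m _.
  by have := PFd_mul (PFd_const (lam i m)) (VPF m); rewrite add0n.
have et : forall t, t != 0 -> e t = 0.
  move=> t t0; have := hid (pa + t * wa) (pb + t * wb).
  rewrite (eq_bigr (fun m : 'I_L => t ^+ (2 * s) * V m t ^+ (2 * s))); last first.
    by move=> m _; rewrite hvV exprMn.
  rewrite (eq_bigr (fun i : 'I_r => t ^+ (2 * s) * (\sum_(m < L) lam i m * V m t) ^+ (2 * s))); last first.
    move=> i _; rewrite stepC -exprMn mulr_sumr; congr (_ ^+ _).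
    by apply: eq_bigr => m _; rewrite hvV mulrCA.
  rewrite -!mulr_sumr => /eqP; rewrite -subr_eq0 -mulrBr mulf_eq0 expf_eq0 (negbTE t0) andbF /=.
  by move/eqP.
have e0 := PFd_cont0 ePF et.
pose C := \prod_(m' <- iota 0 L | (m' != jn) && (m' != kn)) c m'.
have V0 : forall m : 'I_L, V m 0 = C * ((m == j)%:R + y * (m == k)%:R).
  move=> m; rewrite /V; case: (eqVneq m j) => [-> | mj].
    rewrite eqxx (negbTE jk) mulr0 addr0 mulr1.
    by apply: eq_bigr => m' _; rewrite mul0r addr0.
  have -> : ((m : nat) == jn) = false by apply/negbTE.
  case: (eqVneq m k) => [-> | mk].
    rewrite mulr1 add0r mulrC; congr (_ * _); rewrite /C.
    by apply: eq_big => [m'|m' _]; [rewrite andbC | rewrite mul0r addr0].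
  rewrite mulr0 addr0 mulr0; apply/eqP; rewrite mulf_eq0 prodf_seq_eq0; apply/orP; right.
  apply/hasP; exists kn; first exact: memL.
  by rewrite mul0r addr0 ck eqxx andbT; apply/andP; split; [rewrite eq_sym | rewrite eq_sym].
have C0 : C != 0.
  rewrite prodf_seq_neq0; apply/allP => m' _; apply/implyP => /andP [m'j m'k].
  by rewrite /c mulf_neq0 // subr_eq0 eqr_nat.
move: e0; rewrite /e.
rewrite (@sum2 _ _ (fun m => V m 0 ^+ (2 * s)) j k jk); last first.
  by move=> m mj mk; rewrite V0 (negbTE mj) (negbTE mk) mulr0 addr0 mulr0 expr0n (_ : (2 * s == 0)%N = false) //; lia.
rewrite (eq_bigr (fun i : 'I_r => C ^+ (2 * s) * (lam i j + lam i k * y) ^+ (2 * s))); last first.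
  move=> i _; rewrite (@sum2 _ _ (fun m => lam i m * V m 0) j k jk); last first.
    by move=> m mj mk; rewrite V0 (negbTE mj) (negbTE mk) mulr0 addr0 !mulr0.
  rewrite !V0 eqxx (negbTE jk) eq_sym (negbTE jk) eqxx -exprMn; congr (_ ^+ _); rewrite /=; ring.
rewrite !V0 eqxx (negbTE jk) eq_sym (negbTE jk) eqxx -mulr_sumr.
move=> /eqP; rewrite -subr_eq0 => /eqP h.
apply/eqP; rewrite -subr_eq0; apply/eqP.
have : C ^+ (2 * s) * (1 + y ^+ (2 * s) - \sum_(i < r) (lam i j + lam i k * y) ^+ (2 * s)) = 0.
  move: h; rewrite /= ?mulr0 ?mulr1 ?addr0 ?add0r subr0 => h.
  by rewrite -[RHS]h mulr1 exprMn mulrBr mulrDr mulr1.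
by move/eqP; rewrite mulf_eq0 expf_eq0 (negbTE C0) andbF /= => /eqP.
Qed.

Lemma stepE1 (j : 'I_L) : \sum_(i < r) lam i j ^+ (2 * s) = 1.
Proof.
have [k jk] : exists k : 'I_L, j != k.
  case: (eqVneq (j : nat) 0%N) => [j0 | j0].
    have h1 : (1 < L)%N by rewrite ltnS.
    by exists (Ordinal h1); apply/eqP => /(congr1 val) /=; rewrite j0.
  by exists ord0; apply/eqP => /(congr1 val) /=; apply/eqP.
have := stepD jk 0; rewrite expr0n (_ : (2 * s == 0)%N = false); last by lia.
rewrite addr0 => ->; apply: eq_bigr => i _; by rewrite mulr0 addr0.
Qed.

Lemma stepE2 (j k : 'I_L) : j != k -> \sum_(i < r) lam i j ^+ (2 * s).-1 * lam i k = 0.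
Proof.
move=> jk.
pose P : {poly R} := 1 + 'X^(2 * s) - \sum_(i < r) ((lam i j)%:P + lam i k *: 'X) ^+ (2 * s).
have P0 : P = 0.
  apply: poly_eq0_horner => x; rewrite /P !hornerE horner_sum (stepD jk).
  apply/eqP; rewrite subr_eq0; apply/eqP; apply: eq_bigr => i _.
  by rewrite !hornerE.
have := congr1 (fun q : {poly R} => (q^`()).[0]) P0.
rewrite /= deriv0 horner0 /P derivB derivD -polyC1 derivC add0r derivXn.
rewrite raddf_sum /= hornerD hornerN horner_sum hornerMn hornerXn expr0n.
rewrite (_ : ((2 * s).-1 == 0)%N = false); last by lia.
rewrite mul0rn sub0r => /eqP; rewrite oppr_eq0 => /eqP h.
have : \sum_(i < r) lam i j ^+ (2 * s).-1 * lam i k *+ (2 * s) = 0.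
  rewrite -[RHS]h; apply: eq_bigr => i _.
  rewrite deriv_exp derivD derivC derivZ derivX add0r hornerMn hornerM hornerZ hornerC.
  by rewrite horner_exp hornerD hornerC hornerZ hornerX mulr0 addr0 mulr1 mulrC.
rewrite sumrMnl => /eqP; rewrite mulrn_eq0 (_ : (2 * s == 0)%N = false) /= ?orbF; last by lia.
by move/eqP.
Qed.

Theorem rank_bound : (L <= r)%N.
Proof.
pose U : 'M[R]_(r, L) := \matrix_(i, m) lam i m.
pose W : 'M[R]_(r, L) := \matrix_(i, m) lam i m ^+ (2 * s).-1.
have WU : W^T *m U = 1%:M.
  apply/matrixP => a b; rewrite !mxE.
  rewrite (eq_bigr (fun i => lam i a ^+ (2 * s).-1 * lam i b)); last by move=> i _; rewrite !mxE.
  case: (eqVneq a b) => [<- | ab].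
    rewrite /= -(stepE1 a); apply: eq_bigr => i _; rewrite -exprSr prednK //; lia.
  by rewrite /= stepE2.
have := mxrankM_maxr W^T U; rewrite WU mxrank1 => h.
exact: leq_trans h (rank_leq_row U).
Qed.
End Main.


Definition pt (R : realType) (n' : nat) (a b c : R) : 'I_(n'.+3) -> R :=
  fun i => if (i : nat) == 0%N then a else if (i : nat) == 1%N then b
           else if (i : nat) == 2%N then c else 0.
Arguments pt R n' a b c : clear implicits.

Definition lin (R : realType) (n' : nat) (m : nat) : {mpoly R[n'.+3]} :=
  'X_(inord 0) + m%:R *: 'X_(inord 1) + (m%:R ^+ 2) *: 'X_(inord 2).
Arguments lin R n' m : clear implicits.

Definition Hs (R : realType) (n' L m : nat) : {mpoly R[n'.+3]} :=
  \prod_(j <- iota 0 L | j != m) lin R n' j.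
Arguments Hs R n' L m : clear implicits.

Lemma meval_lin (R : realType) n' m (a b : R) : (lin R n' m).@[pt R n' a b 1] = ell m a b.
Proof.
rewrite /lin !mevalD !mevalZ !mevalXU /pt /ell !inordK //=.
by rewrite mulr1.
Qed.

Lemma meval_Hs (R : realType) n' L m (a b : R) : (Hs R n' L m).@[pt R n' a b 1] = hv L m a b.
Proof.
rewrite /Hs /hv; elim: (iota 0 L) => [|x r ih]; first by rewrite !big_nil meval1.
by rewrite !big_cons; case: (x != m) => //; rewrite mevalM ih meval_lin.
Qed.

Lemma lin_homog (R : realType) n' m : lin R n' m \is 1.-homog.
Proof.
have hX : forall i : 'I_(n'.+3), ('X_i : {mpoly R[n'.+3]}) \is 1.-homog.
  by move=> i; rewrite dhomogX; apply/eqP; exact: mdeg1.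
by rewrite /lin !dhomogD ?dhomogZ ?hX.
Qed.

Lemma Hs_homog (R : realType) n' L m : (m < L)%N -> Hs R n' L m \is L.-1.-homog.
Proof.
move=> mL; rewrite -(count_neq mL) /Hs.
elim: (iota 0 L) => [|x r ih] /=; first by rewrite big_nil dhomog1.
rewrite big_cons; case: (x != m) => /=; last exact: ih.
exact: dhomogM (lin_homog R n' x) ih.
Qed.

Lemma pt_line (R : realType) n' (a0 a1 b0 b1 t : R) :
  (fun i => pt R n' a0 b0 1 i + t * pt R n' a1 b1 0 i) =1 pt R n' (a0 + t * a1) (b0 + t * b1) 1.
Proof.
move=> i; rewrite /pt; case: (nat_of_ord i) => [|[|[|k]]] //=.
  by rewrite mulr0 addr0.
by rewrite mulr0 addr0.
Qed.

Theorem mainTheorem6 (R : realType) (n s : nat) :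
  (3 <= n)%N -> (1 <= s)%N ->
  forall B : nat, exists D : nat, forall d : nat, (D <= d)%N ->
    ~ pyth_le R n (2 * s) d B.
Proof.
case: n => [|[|[|n']]] // _ hs B; exists B.+1 => d Bd hp.
have hd : (0 < d)%N by apply: leq_trans Bd.
pose L := d.+1.
pose f := \sum_(m < L) (Hs R n' L m) ^+ (2 * s).
have fS : in_Sigma (2 * s) d f.
  exists L; exists (fun m : 'I_L => Hs R n' L m); split => // m.
  exact: (Hs_homog R n' (ltn_ord m)).
have [r [rB [F [Fh fE]]]] := hp f fS.
pose g (i : 'I_r) (a b : R) := (F i).@[pt R n' a b 1].
have gPF : forall i (a0 a1 b0 b1 : R), PFd d (fun t => g i (a0 + t * a1) (b0 + t * b1)).
  move=> i a0 a1 b0 b1.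
  apply: PFd_ext (PFd_meval (pt R n' a0 b0 1) (pt R n' a1 b1 0) (Fh i)) => t.
  by rewrite /g; apply: meval_eq; apply: pt_line.
have hid : forall a b : R,
    \sum_(m < L) hv L m a b ^+ (2 * s) = \sum_(i < r) g i a b ^+ (2 * s).
  move=> a b; have := congr1 (meval (pt R n' a b 1)) fE.
  rewrite !raddf_sum /=.
  under eq_bigr do rewrite rmorphXn /= meval_Hs.
  by under [in X in _ = X -> _]eq_bigr do rewrite rmorphXn.
have := rank_bound hs hd gPF hid.
move=> h; move: h rB Bd; rewrite /L; lia.
Qed.
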